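(* Let $p\geq 0$ and let $G$ be a balanced bipartite graph of order $2n$ with $\delta(G)\geq k$, where $n\geq n_0(k,p)$, with $n_0(k,p)=2k^2+3$ if $k=p+2$ and $n_0(k,p)=(k+2)(k-p+1)$ otherwise. If $k\geq p+1$ and $\rho(G)\geq \sqrt{n(n-k+p)+k(k-p)}$, then $G$ is $2p$-Hamilton-biconnected.
   Context: $\rho(G)$ is the largest eigenvalue of the adjacency matrix. A bipartite graph $G=(X,Y;E)$ is balanced if $|X|=|Y|$; it is Hamilton-biconnected if for every $u\in X$, $v\in Y$ there is a Hamiltonian path with ends $u,v$. A vertex set $W$ is balanced if $|W\cap X|=|W\cap Y|$; $G$ is $2p$-Hamilton-biconnected if for every balanced $W$ with $|W|=2p$, the subgraph induced by $V(G)\setminus W$ is Hamilton-biconnected. *)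

(* Defs.v *)
From HB Require Import structures.
From mathcomp Require Import all_boot all_order all_algebra.
From mathcomp Require Import classical_sets reals.
Set Implicit Arguments. Unset Strict Implicit. Unset Printing Implicit Defensive.
Import Order.TTheory GRing.Theory Num.Theory.
Local Open Scope ring_scope.

Definition simple_graph (T : finType) (e : rel T) : Prop :=
  symmetric e /\ irreflexive e.

Definition min_deg_ge (T : finType) (e : rel T) (k : nat) : Prop :=
  forall x : T, (k <= #|[set y | e x y]|)%N.

Definition bipartition (T : finType) (e : rel T) (X : {set T}) : Prop :=
  forall x y, e x y -> (x \in X) != (y \in X).

Definition adj_mx (R : pzRingType) (T : finType) (e : rel T) : 'M[R]_#|T| :=
  \matrix_(i, j) (e (enum_val i) (enum_val j))%:R.

(* rho(G): the largest eigenvalue of the adjacency matrix (the eigenvalues of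
   a real symmetric matrix are real; the set is finite and nonempty). *)
Definition spec_rad (R : realType) (T : finType) (e : rel T) : R :=
  sup [set a : R | eigenvalue (adj_mx R e) a].

Definition ham_path_avoiding (T : finType) (e : rel T) (W : {set T}) (u v : T)
  : Prop :=
  exists s : seq T,
    [/\ uniq (u :: s), (forall x, (x \in u :: s) = (x \notin W)),
        path e u s & last u s = v].

Definition ham_biconnected_minus (T : finType) (e : rel T) (X W : {set T})
  : Prop :=
  forall u v, u \in X :\: W -> v \in ~: X :\: W -> ham_path_avoiding e W u v.

Definition ham_biconnected_2p (T : finType) (e : rel T) (X : {set T}) (p : nat)
  : Prop :=
  forall W : {set T}, #|W :&: X| = #|W :&: ~: X| -> #|W| = (2 * p)%N ->
    ham_biconnected_minus e X W.

Definition n0 (k p : nat) : nat :=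
  if k == p.+2 then (2 * k ^ 2 + 3)%N else ((k + 2) * (k - p + 1))%N.

(* Main.v *)
Require Import Defs.
From HB Require Import structures.
From mathcomp Require Import all_boot all_order all_algebra.
From mathcomp Require Import classical_sets reals.
Import Order.TTheory GRing.Theory Num.Theory.
From mathcomp Require Import zify.
Set Implicit Arguments. Unset Strict Implicit. Unset Printing Implicit Defensive.
Local Notation subsetP := fintype.subsetP.
Local Notation inE := finset.inE.

Section PathStuff.
Variable T : eqType.

Fixpoint succ (x : T) (p : seq T) (z : T) : T :=
  match p with [::] => z | y :: p' => if z == x then y else succ y p' z end.

Lemma succ_split (u : T) (s : seq T) (z : T) :
  z \in u :: s -> z != last u s ->
  exists s1 s2, s = s1 ++ succ u s z :: s2 /\ last u s1 = z.
Proof.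
elim: s u => [|y s IH] u /=.
  by rewrite inE => /eqP -> /=; rewrite (introT eqP (erefl u)).
rewrite inE; case: (z =P u) => [-> _|nzu /= zin zl].
  by exists [::], s; rewrite /= ?eqxx.
have [s1 [s2 [E L]]] := IH y zin zl.
exists (y :: s1), s2; split => //=.
by rewrite {1}E.
Qed.

Lemma uniq_mid (s1 s2 : seq T) (w : T) : uniq (s1 ++ w :: s2) -> w \notin s1.
Proof. by rewrite -cat1s catA cats1 cat_uniq rcons_uniq => /andP[/andP[]]. Qed.

Lemma split_uniq (u : T) (s s1 s2 t1 t2 : seq T) (w : T) :
  uniq (u :: s) -> s = s1 ++ w :: s2 -> s = t1 ++ w :: t2 -> s1 = t1.
Proof.
move=> /= /andP[_ us] E1 E2.
have h1 : index w s = size s1.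
  move: us; rewrite E1 => /uniq_mid H.
  by rewrite index_cat (negbTE H) index_head addn0.
have h2 : index w s = size t1.
  move: us; rewrite E2 => /uniq_mid H.
  by rewrite index_cat (negbTE H) index_head addn0.
have -> : s1 = take (size s1) s by rewrite E1 take_size_cat.
have -> : t1 = take (size t1) s by rewrite E2 take_size_cat.
by rewrite -h1 -h2.
Qed.

Lemma succ_inj (u : T) (s : seq T) (z1 z2 : T) :
  uniq (u :: s) -> z1 \in u :: s -> z1 != last u s ->
  z2 \in u :: s -> z2 != last u s -> succ u s z1 = succ u s z2 -> z1 = z2.
Proof.
move=> U i1 l1 i2 l2 E.
have [s1 [s2 [E1 L1]]] := succ_split i1 l1.
have [t1 [t2 [E2 L2]]] := succ_split i2 l2.
rewrite E in E1; have := split_uniq U E1 E2.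
by move=> eq; rewrite -L1 -L2 eq.
Qed.

Lemma succ_mem (u : T) (s : seq T) (z : T) :
  z \in u :: s -> z != last u s -> succ u s z \in s.
Proof.
move=> i l; have [s1 [s2 [E1 _]]] := succ_split i l.
by rewrite {2}E1 mem_cat inE eqxx orbT.
Qed.

Lemma succ_neq_head (u : T) (s : seq T) (z : T) :
  uniq (u :: s) -> z \in u :: s -> z != last u s -> succ u s z != u.
Proof.
move=> /= /andP[us _] i l; apply/eqP => E.
by move: (succ_mem i l); rewrite E (negbTE us).
Qed.

Lemma succ_edge (e : rel T) (u : T) (s : seq T) (z : T) :
  path e u s -> z \in u :: s -> z != last u s -> e z (succ u s z).
Proof.
move=> P i l; have [s1 [s2 [E1 L1]]] := succ_split i l.
by move: P; rewrite {1}E1 cat_path L1 /= => /and3P[].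
Qed.

Lemma cat_split (l r s1 s2 : seq T) :
  l ++ r = s1 ++ s2 ->
  (exists m, l = s1 ++ m /\ s2 = m ++ r) \/ (exists m, s1 = l ++ m /\ r = m ++ s2).
Proof.
elim: l s1 => [|x l IH] s1 /=.
  by move=> ->; right; exists s1.
case: s1 => [|y s1] /=.
  by move=> <-; left; exists (x :: l).
case=> -> /IH [[m [-> ->]]|[m [-> ->]]].
  by left; exists m.
by right; exists m.
Qed.

End PathStuff.


Definition ham (T : finType) (e : rel T) (V : {set T}) (u v : T) (s : seq T) : Prop :=
  [/\ uniq (u :: s), forall x, (x \in u :: s) = (x \in V), path e u s & last u s = v].

Definition HB (T : finType) (e : rel T) (X V : {set T}) : Prop :=
  forall u v, u \in V :&: X -> v \in V :\: X -> exists s, ham e V u v s.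

Definition dg (T : finType) (e : rel T) (S : {set T}) (x : T) : nat :=
  #|[set y in S | e x y]|.

Lemma pigeon (T : finType) (D : {set T}) (P Q : pred T) :
  #|D| < #|[set x in D | P x]| + #|[set x in D | Q x]| ->
  exists2 x, x \in D & P x && Q x.
Proof.
move=> H.
have : 0 < #|[set x in D | P x] :&: [set x in D | Q x]|.
  have := cardsUI [set x in D | P x] [set x in D | Q x].
  have : #|[set x in D | P x] :|: [set x in D | Q x]| <= #|D|.
    by apply: subset_leq_card; apply/subsetP => x; rewrite !inE; case: (x \in D); rewrite ?andbF.
  lia.
rewrite card_gt0 => /set0Pn [x]; rewrite !inE => /andP[/andP[xD Px] /andP[_ Qx]].
by exists x => //; rewrite Px Qx.
Qed.

Lemma succ_count (T : finType) (u : T) (s : seq T) (D E : {set T}) (Q : pred T) :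
  uniq (u :: s) ->
  (forall x, x \in D -> x \in u :: s) ->
  (forall x, x \in D -> x != last u s) ->
  (forall x, x \in D -> succ u s x \in E) ->
  #|D| = #|E| ->
  #|[set x in D | Q (succ u s x)]| = #|[set y in E | Q y]|.
Proof.
move=> U Dm Dl DE cDE.
have inj : {in D &, injective (succ u s)}.
  by move=> x y xD yD; apply: succ_inj => //; auto.
have imD : succ u s @: D = E.
  apply/eqP; rewrite eqEcard; apply/andP; split.
    by apply/subsetP => y /imsetP [x xD ->]; apply: DE.
  by rewrite card_in_imset // cDE.
have -> : [set y in E | Q y] = succ u s @: [set x in D | Q (succ u s x)].
  apply/setP => y; rewrite inE; apply/andP/imsetP.
    move=> [yE Qy]; move: yE; rewrite -imD => /imsetP [x xD Ex].
    by exists x => //; rewrite inE xD -Ex.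
  move=> [x]; rewrite inE => /andP[xD Qx] ->; split => //.
  by rewrite -imD; apply: imset_f.
rewrite card_in_imset //; move=> x y; rewrite !inE => /andP[xD _] /andP[yD _].
exact: inj.
Qed.

Section Rot.
Variables (T : eqType) (e : rel T).
Hypothesis esym : symmetric e.

Lemma path_rev_cat (x y : T) (s t : seq T) :
  path e x (rev (y :: s) ++ t) = [&& e x (last y s), path e y s & path e y t].
Proof.
elim: s y t => [|z s IH] y t; first by [].
rewrite rev_cons cat_rcons IH /= esym.
by rewrite [e z y]esym; case: (e (last z s) x); case: (e y z); case: (path e z s).
Qed.

Lemma rotate (u p q r0 : T) (l r s1 s2 : seq T) :
  irreflexive e ->
  l ++ r0 :: r = s1 ++ q :: s2 -> last u s1 = p ->
  path e u l -> path e r0 r -> e (last u l) p -> e r0 q ->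
  exists s', [/\ path e u s', last u s' = last u (l ++ r0 :: r) &
                perm_eq s' (l ++ r0 :: r)].
Proof.
move=> irr E Lp pl pr ep eq.
case: (cat_split E) => [[M [El Es]]|[M [Es Er]]].
- case: M El Es => [|q' l2] El Es.
    by move: ep; rewrite El cats0 Lp irr.
  case: Es => Eq Es; rewrite -Eq in El.
  exists (s1 ++ rev (q :: l2) ++ r0 :: r); split.
  + move: pl; rewrite El cat_path Lp /= => /andP[pl1 /andP[_ pl2]].
    rewrite El last_cat Lp /= in ep.
    by rewrite cat_path Lp path_rev_cat pl1 esym ep pl2 /= esym eq pr.
  + by rewrite !last_cat /=.
  + rewrite El -catA perm_cat2l perm_cat2r; by rewrite perm_rev perm_refl.
- case: M Es Er => [|r0' r1] Es Er.
    by move: ep; rewrite -Lp Es cats0 irr.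
  case: Er => Eq Er; rewrite -Eq in Es.
  exists (l ++ rev (r0 :: r1) ++ q :: s2); split.
  + move: pr; rewrite Er cat_path => /andP[pr1 /= /andP[_ pr2]].
    rewrite -Lp Es last_cat /= in ep.
    by rewrite cat_path path_rev_cat pl ep pr1 /= eq pr2.
  + by rewrite !last_cat /= Er last_cat.
  + rewrite perm_cat2l Er -cat_cons perm_cat2r; by rewrite perm_rev perm_refl.
Qed.

Lemma path_split_bad (f : rel T) (u : T) (s : seq T) :
  path [rel x y | e x y || f x y] u s ->
  path e u s \/ exists l r0 r, [/\ s = l ++ r0 :: r, path e u l,
     ~~ e (last u l) r0, f (last u l) r0 & path [rel x y | e x y || f x y] r0 r].
Proof.
elim: s u => [|y s IH] u /=; first by left.
case/andP => euy ps.
case eu: (e u y).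
  case: (IH y ps) => [p|[l [r0 [r [-> pl ne fe pr]]]]].
    by left; rewrite p.
  by right; exists (y :: l), r0, r; split => //=; rewrite eu.
right; exists [::], y, s; split => //=; first by rewrite eu.
by move: euy; rewrite /= eu.
Qed.

End Rot.


Definition fab (T : eqType) (a b : T) : rel T :=
  [rel x y | ((x == a) && (y == b)) || ((x == b) && (y == a))].
Definition addE (T : eqType) (e : rel T) (a b : T) : rel T :=
  [rel x y | e x y || fab a b x y].

Lemma ham_perm (T : finType) (e e' : rel T) (V : {set T}) (u v : T) (s s' : seq T) :
  ham e' V u v s -> perm_eq s' s -> path e u s' -> last u s' = v -> ham e V u v s'.
Proof.
move=> [U M P L] ps P' L'; split => //.
  by rewrite (perm_uniq (s2 := u :: s)) // perm_cons.
by move=> x; rewrite -M; apply: perm_mem; rewrite perm_cons.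
Qed.

Lemma card_D1_ge (T : finType) (S : {set T}) (P : pred T) (w : T) :
  #|[set x in S | P x]| <= (#|[set x in S :\ w | P x]|).+1.
Proof.
rewrite (cardsD1 w [set x in S | P x]).
have -> : [set x in S | P x] :\ w = [set x in S :\ w | P x].
  by apply/setP => x; rewrite !inE andbA.
by case: (w \in _).
Qed.

Lemma two_elems (T : finType) (S : {set T}) (w : T) :
  1 < #|S| -> exists2 x, x \in S & x != w.
Proof.
move=> H; have : 0 < #|S :\ w| by move: H; rewrite (cardsD1 w S); case: (w \in S) => /=; lia.
by rewrite card_gt0 => /set0Pn [x]; rewrite !inE => /andP[xw xS]; exists x.
Qed.

Lemma bip_sides (T : finType) (e : rel T) (X : {set T}) x y :
  bipartition e X -> e x y -> (y \in X) = ~~ (x \in X).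
Proof. by move=> B /B; case: (x \in X); case: (y \in X). Qed.

Lemma bip_add (T : finType) (e : rel T) (X : {set T}) a b :
  bipartition e X -> a \in X -> b \notin X -> bipartition (addE e a b) X.
Proof.
move=> B aX bX x y /=; case/orP => [/B //|/orP[/andP[/eqP-> /eqP->]|/andP[/eqP-> /eqP->]]].
  by rewrite aX (negbTE bX).
by rewrite aX (negbTE bX).
Qed.

Lemma irr_bip (T : finType) (e : rel T) (X : {set T}) :
  bipartition e X -> irreflexive e.
Proof. by move=> B x; apply/negP => /B; rewrite eqxx. Qed.

Lemma count_AB (T : finType) (e : rel T) (X V : {set T}) (u v : T) (s : seq T) m
  (Q : pred T) :
  bipartition e X -> ham e V u v s -> v \notin X ->
  #|V :&: X| = m -> #|V :\: X| = m ->
  #|[set x in V :&: X | Q (succ u s x)]| = #|[set y in V :\: X | Q y]|.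
Proof.
move=> B [U M P L] vX cA cB; apply: succ_count => //; last by rewrite cA cB.
- by move=> x; rewrite M inE => /andP[].
- by move=> x; rewrite inE L => /andP[_ xX]; apply/eqP => E; move: vX; rewrite -E xX.
- move=> x xD.
  have xm : x \in u :: s by rewrite M; move: xD; rewrite inE => /andP[].
  have xl : x != last u s by rewrite L; apply/eqP => E; move: xD vX; rewrite inE E => /andP[_ ->].
  have ed := succ_edge P xm xl.
  rewrite !inE -M inE (succ_mem xm xl) orbT (bip_sides B ed).
  by move: xD; rewrite inE => /andP[_ ->].
Qed.

Lemma count_BA (T : finType) (e : rel T) (X V : {set T}) (u v : T) (s : seq T) m
  (Q : pred T) :
  bipartition e X -> ham e V u v s -> u \in V :&: X -> v \in V :\: X ->
  #|V :&: X| = m -> #|V :\: X| = m ->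
  #|[set x in (V :\: X) :\ v | Q (succ u s x)]| = #|[set y in (V :&: X) :\ u | Q y]|.
Proof.
move=> B [U M P L] uA vB cA cB; apply: succ_count => //.
- by move=> x; rewrite M !inE => /and3P[].
- by move=> x; rewrite L !inE => /andP[].
- move=> x xD.
  have xm : x \in u :: s by rewrite M; move: xD; rewrite !inE => /and3P[].
  have xl : x != last u s by rewrite L; move: xD; rewrite !inE => /andP[].
  have ed := succ_edge P xm xl.
  rewrite !inE (succ_neq_head U xm xl) -M inE (succ_mem xm xl) orbT (bip_sides B ed).
  by move: xD; rewrite !inE => /and3P[_ -> _].
- move: (cardsD1 v (V :\: X)) (cardsD1 u (V :&: X)); rewrite uA vB cA cB /=; lia.
Qed.


Lemma uniq_disj (T : eqType) (s1 s2 : seq T) x :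
  uniq (s1 ++ s2) -> x \in s1 -> x \in s2 -> False.
Proof.
rewrite cat_uniq => /and3P[_ /negP H _] x1 x2; apply: H.
by apply/hasP; exists x.
Qed.

Lemma fab_mem (T : eqType) (a b x y : T) (s : seq T) :
  fab a b x y -> x \in s -> y \in s -> (a \in s) && (b \in s).
Proof.
by case/orP => /andP[/eqP-> /eqP->] -> ->.
Qed.

Lemma fab_l (T : eqType) (a b x y : T) (s : seq T) :
  fab a b x y -> a \in s -> b \in s -> x \in s.
Proof. by case/orP => /andP[/eqP-> _]. Qed.

Lemma cardsD1_in (T : finType) (S : {set T}) x : x \in S -> #|S :\ x| = #|S|.-1.
Proof. by move=> xS; rewrite (cardsD1 x S) xS. Qed.

Lemma arith1 m da db x y : 0 < m -> m.+2 <= da + db -> da <= x.+1 -> db <= y.+1 -> m.-1 < x + y.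
Proof. lia. Qed.

Lemma closure_step (T : finType) (e : rel T) (X V : {set T}) (a b : T) (m : nat) :
  symmetric e -> bipartition e X ->
  #|V :&: X| = m -> #|V :\: X| = m ->
  a \in V :&: X -> b \in V :\: X -> ~~ e a b ->
  m.+2 <= dg e (V :\: X) a + dg e (V :&: X) b ->
  HB (addE e a b) X V -> HB e X V.
Proof.
move=> sym B cA cB aA bB nab deg H u v uA vB.
have aX : a \in X by move: aA; rewrite inE => /andP[].
have bX : b \notin X by move: bB; rewrite inE => /andP[].
have vX : v \notin X by move: vB; rewrite inE => /andP[].
have Bp : bipartition (addE e a b) X := bip_add B aX bX.
have [s hs] := H u v uA vB.
have hs' := hs; case: hs' => U M P L.
case: (path_split_bad P) => [Pe|[l [r0 [r [Es pl ne fe pr']]]]].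
  by exists s; split.
have pr : path e r0 r.
  case: (path_split_bad pr') => [//|[l' [r0' [r' [Er _ _ fe' _]]]]].
  exfalso.
  have m1 : last r0 l' \in r0 :: r by rewrite Er -cat_cons mem_cat mem_last.
  have m2 : r0' \in r0 :: r by rewrite Er inE mem_cat inE eqxx !orbT.
  have /andP[am bm] := fab_mem fe' m1 m2.
  have m3 : last u l \in r0 :: r := fab_l fe am bm.
  apply: (uniq_disj (s1 := u :: l) _ (mem_last u l) m3).
  by rewrite cat_cons -Es.
have fin : forall p, p \in u :: s -> p != last u s -> e (last u l) p ->
    e r0 (succ u s p) -> exists s', ham e V u v s'.
  move=> p pm pl' e1 e2.
  have [s1 [s2 [Es2 L2]]] := succ_split pm pl'.
  have E : l ++ r0 :: r = s1 ++ succ u s p :: s2 by rewrite -Es.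
  have [s' [P' L' pe]] := rotate sym (irr_bip B) E L2 pl pr e1 e2.
  exists s'; apply: (ham_perm hs) => //; first by rewrite Es.
  by rewrite L' -Es.
case/orP: fe => /andP[/eqP ea /eqP eb].
- (* last = a, r0 = b : use B -> A pairs *)
  have cnt := count_BA (e b) Bp hs uA vB cA cB.
  have h1 := card_D1_ge (V :\: X) (e a) v.
  have h2 := card_D1_ge (V :&: X) (e b) u.
  have cD : #|(V :\: X) :\ v| = m.-1 by rewrite cardsD1_in // cB.
  have [p pD /andP[p1 p2]] :
      exists2 p, p \in (V :\: X) :\ v & e a p && e b (succ u s p).
    apply: pigeon; rewrite cnt cD.
    have m0 : 0 < m by rewrite -cA card_gt0; apply/set0Pn; exists u.
    exact: arith1 m0 deg h1 h2.
  apply: (fin p).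
  - by rewrite M; move: pD; rewrite !inE => /and3P[].
  - by rewrite L; move: pD; rewrite !inE => /andP[].
  - by rewrite ea.
  - by rewrite eb.
- (* last = b, r0 = a : use A -> B pairs *)
  have cnt := count_AB (e a) Bp hs vX cA cB.
  have [p pD /andP[p1 p2]] :
      exists2 p, p \in V :&: X & e b p && e a (succ u s p).
    apply: pigeon; rewrite cnt cA.
    by rewrite /dg in deg; rewrite addnC; exact: ltnW deg.
  have pX : p \in X by move: pD; rewrite inE => /andP[].
  apply: (fin p).
  - by rewrite M; move: pD; rewrite !inE => /andP[].
  - by rewrite L; apply/eqP => E; move: vX; rewrite -E pX.
  - by rewrite ea.
  - by rewrite eb.
Qed.


Lemma ham_add2 (T : finType) (e : rel T) (V : {set T}) a b x y s u v s' :
  ham e (V :\: [set a; b]) x y s -> a \in V -> b \in V -> a != b ->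
  perm_eq (u :: s') [:: a, b & x :: s] -> path e u s' -> last u s' = v ->
  ham e V u v s'.
Proof.
move=> [U M P L] aV bV ab pe P' L'; split => //.
- have an : a \notin x :: s by rewrite M !inE eqxx.
  have bn : b \notin x :: s by rewrite M !inE eqxx orbT.
  rewrite (perm_uniq pe).
  have -> : uniq [:: a, b & x :: s] =
    [&& a \notin b :: x :: s, b \notin x :: s & uniq (x :: s)] by [].
  by rewrite U bn andbT inE negb_or ab an.
- move=> z; rewrite (perm_mem pe) in_cons in_cons M !inE.
  by case: (z =P a) => [->|_] //=; case: (z =P b) => [->|_] //=; rewrite andbT.
Qed.

Lemma perm_ins (T : eqType) (u a b q : T) s1 s2 :
  perm_eq (u :: s1 ++ [:: b, a, q & s2]) [:: a, b, u & s1 ++ q :: s2].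
Proof. by apply/permP => P; rewrite /= !count_cat /=; lia. Qed.

Lemma absorb (T : finType) (e : rel T) (X V : {set T}) (a b : T) (m : nat) :
  symmetric e -> bipartition e X ->
  #|V :&: X| = m -> #|V :\: X| = m ->
  a \in V :&: X -> b \in V :\: X -> e a b ->
  1 < dg e (V :\: X) a -> 1 < dg e (V :&: X) b ->
  m.+2 <= dg e (V :\: X) a + dg e (V :&: X) b ->
  HB e X (V :\: [set a; b]) -> HB e X V.
Proof.
move=> sym B cA cB aA bB eab da db deg H u v uA vB.
have aX : a \in X by move: aA; rewrite inE => /andP[].
have bX : b \notin X by move: bB; rewrite inE => /andP[].
have aV : a \in V by move: aA; rewrite inE => /andP[].
have bV : b \in V by move: bB; rewrite inE => /andP[].
have ab : a != b by apply/eqP => E; move: bX; rewrite -E aX.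
have VA : (V :\: [set a; b]) :&: X = (V :&: X) :\ a.
  apply/setP => z; rewrite !inE; case: (z =P a) => [->|_] //=.
  by case: (z =P b) => [->|_]; rewrite ?(negbTE bX) ?andbF.
have VB : (V :\: [set a; b]) :\: X = (V :\: X) :\ b.
  apply/setP => z; rewrite !inE; case: (z =P b) => [->|_]; first by rewrite !orbT /= ?andbF.
  by case: (z =P a) => [->|_]; rewrite ?aX ?andbF.
have [x xA ebx] : exists2 x, x \in (V :\: [set a; b]) :&: X & e b x.
  have [x] := two_elems a db.
  rewrite inE => /andP[xA ebx] xa.
  by exists x => //; rewrite VA in_setD1 xa xA.
have [y yB eay] : exists2 y, y \in (V :\: [set a; b]) :\: X & e a y.
  have [y] := two_elems b da.
  rewrite inE => /andP[yB eay] yb.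
  by exists y => //; rewrite VB in_setD1 yb yB.
case: (u =P a) => [ua|ua]; case: (v =P b) => [vb|vb].
- subst u v; have [s hs] := H x y xA yB.
  exists (rev (x :: s) ++ [:: b]); apply: (ham_add2 hs) => //.
  + rewrite perm_cons -cat1s perm_catC /= perm_cons perm_rev //.
  + case: hs => _ _ P L.
    by rewrite path_rev_cat // L eay P /= sym ebx.
  + by rewrite last_cat.
- subst u.
  have vB' : v \in (V :\: [set a; b]) :\: X by rewrite VB in_setD1 vB andbT; apply/eqP.
  have [s hs] := H x v xA vB'.
  exists (b :: x :: s); apply: (ham_add2 hs) => //.
  + case: hs => _ _ P L; by rewrite /= eab ebx P.
  + by case: hs.
- subst v.
  have uA' : u \in (V :\: [set a; b]) :&: X by rewrite VA in_setD1 uA andbT; apply/eqP.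
  have [s hs] := H u y uA' yB.
  exists (s ++ [:: a; b]); apply: (ham_add2 hs) => //.
  + by rewrite -cat_cons perm_catC.
  + case: hs => _ _ P L; by rewrite cat_path P L /= sym eay eab.
  + by rewrite last_cat.
- have uA' : u \in (V :\: [set a; b]) :&: X by rewrite VA in_setD1 uA andbT; apply/eqP.
  have vB' : v \in (V :\: [set a; b]) :\: X by rewrite VB in_setD1 vB andbT; apply/eqP.
  have [s hs] := H u v uA' vB'.
  have cA' : #|(V :\: [set a; b]) :&: X| = m.-1 by rewrite VA cardsD1_in // cA.
  have cB' : #|(V :\: [set a; b]) :\: X| = m.-1 by rewrite VB cardsD1_in // cB.
  have vX : v \notin X by move: vB; rewrite inE => /andP[].
  have cnt := count_AB (e a) B hs vX cA' cB'.
  have h1 := card_D1_ge (V :&: X) (e b) a.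
  have h2 := card_D1_ge (V :\: X) (e a) b.
  have m0 : 0 < m by rewrite -cA card_gt0; apply/set0Pn; exists u.
  have [p pD /andP[p1 p2]] :
      exists2 p, p \in (V :\: [set a; b]) :&: X & e b p && e a (succ u s p).
    apply: pigeon; rewrite cnt cA' VA VB addnC.
    by rewrite /dg in deg; exact: arith1 m0 deg h2 h1.
  have hs' := hs; case: hs' => U M P L.
  have pm : p \in u :: s by rewrite M; move: pD; rewrite inE => /andP[].
  have pl : p != last u s.
    by rewrite L; apply/eqP => E; move: vX pD; rewrite -E inE => /negbTE -> /andP[].
  have [s1 [s2 [Es Lp]]] := succ_split pm pl.
  exists (s1 ++ [:: b, a, succ u s p & s2]); apply: (ham_add2 hs) => //.
  + by rewrite {2}Es perm_ins.
  + move: P; rewrite {1}Es !cat_path Lp /= => /andP[-> /andP[_ ->]].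
    by rewrite sym p1 (sym b a) eab p2.
  + by rewrite -L {2}Es !last_cat.
Qed.


Definition cdg (T : finType) (e : rel T) (S : {set T}) (x : T) : nat :=
  #|[set y in S | ~~ e x y]|.

Definition NE (T : finType) (e : rel T) (X V : {set T}) : nat :=
  \sum_(a in V :&: X) cdg e (V :\: X) a.

Lemma dg_cdg (T : finType) (e : rel T) (S : {set T}) x : dg e S x + cdg e S x = #|S|.
Proof.
rewrite /dg /cdg -(cardsID [set y | e x y] S); congr (_ + _); apply: eq_card => y;
by rewrite !inE andbC.
Qed.

Lemma card_sum (T : finType) (S : {set T}) (P : pred T) :
  #|[set y in S | P y]| = \sum_(y in S) (P y : nat).
Proof.
rewrite -sum1_card big_mkcond [RHS]big_mkcond /=.
by apply: eq_bigr => y _; rewrite !inE; case: (y \in S); case: (P y).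
Qed.

Lemma NE_B (T : finType) (e : rel T) (X V : {set T}) :
  symmetric e -> NE e X V = \sum_(b in V :\: X) cdg e (V :&: X) b.
Proof.
move=> sym; rewrite /NE /cdg.
under eq_bigr => a _ do rewrite card_sum.
rewrite exchange_big /=; apply: eq_bigr => b _; rewrite card_sum.
by apply: eq_bigr => a _; rewrite sym.
Qed.

Lemma NE_remove (T : finType) (e : rel T) (X V : {set T}) (x y : T) :
  symmetric e -> x \in V :&: X -> y \in V :\: X -> e x y ->
  NE e X V = cdg e (V :\: X) x + cdg e (V :&: X) y + NE e X (V :\: [set x; y]).
Proof.
move=> sym xA yB exy.
have xX : x \in X by move: xA; rewrite inE => /andP[].
have yX : y \notin X by move: yB; rewrite inE => /andP[].
have VA : (V :\: [set x; y]) :&: X = (V :&: X) :\ x.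
  apply/setP => z; rewrite !inE; case: (z =P x) => [->|_] //=.
  by case: (z =P y) => [->|_]; rewrite ?(negbTE yX) ?andbF.
have VB : (V :\: [set x; y]) :\: X = (V :\: X) :\ y.
  apply/setP => z; rewrite !inE; case: (z =P y) => [->|_]; first by rewrite !orbT /= ?andbF.
  by case: (z =P x) => [->|_]; rewrite ?xX ?andbF.
rewrite /NE VA VB (bigD1 x) //= -addnA; congr (_ + _).
have E : forall a, (a \in V :&: X) && (a != x) ->
    cdg e (V :\: X) a = (~~ e a y : nat) + cdg e ((V :\: X) :\ y) a.
  move=> a _; rewrite /cdg (cardsD1 y [set z in V :\: X | ~~ e a z]) inE yB /=.
  congr (_ + _); apply: eq_card => z; rewrite !inE; case: (z == y) => //=.
rewrite (eq_bigr _ E) big_split /=; congr (_ + _).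
  rewrite /cdg card_sum [RHS](bigD1 x) //= [e y x]sym exy /= add0n.
  by apply: eq_bigr => a _; rewrite sym.
by apply: eq_bigl => a; rewrite in_setD1 andbC.
Qed.


Definition cls (T : finType) (e : rel T) (X V : {set T}) (m : nat) : Prop :=
  (forall a b, a \in V :&: X -> b \in V :\: X -> e a b) \/
  exists t, [/\ 0 < t, (forall x, x \in V :&: X -> t <= dg e (V :\: X) x),
     (forall y, y \in V :\: X -> t <= dg e (V :&: X) y) & NE e X V < t * (m - t)].

Definition closedP (T : finType) (e : rel T) (X V : {set T}) (m : nat) : Prop :=
  forall a b, a \in V :&: X -> b \in V :\: X -> ~~ e a b ->
    dg e (V :\: X) a + dg e (V :&: X) b <= m.+1.

Definition goodpair (T : finType) (e : rel T) (X V : {set T}) (m : nat) (a b : T) : Prop :=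
  [/\ a \in V :&: X, b \in V :\: X, e a b, 1 < dg e (V :\: X) a &
   [/\ 1 < dg e (V :&: X) b,
      m.+2 <= dg e (V :\: X) a + dg e (V :&: X) b & cls e X (V :\: [set a; b]) m.-1]].

Lemma VA_eq (T : finType) (X V : {set T}) x y : y \notin X ->
  (V :\: [set x; y]) :&: X = (V :&: X) :\ x.
Proof.
move=> yX; apply/setP => z; rewrite !inE; case: (z =P x) => [->|_] //=.
by case: (z =P y) => [->|_]; rewrite ?(negbTE yX) ?andbF.
Qed.

Lemma VB_eq (T : finType) (X V : {set T}) x y : x \in X ->
  (V :\: [set x; y]) :\: X = (V :\: X) :\ y.
Proof.
move=> xX; apply/setP => z; rewrite !inE; case: (z =P y) => [->|_]; first by rewrite !orbT /= ?andbF.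
by case: (z =P x) => [->|_]; rewrite ?xX ?andbF.
Qed.

Lemma sum_sub (T : finType) (A S : {set T}) (f : T -> nat) :
  S \subset A -> \sum_(i in S) f i <= \sum_(i in A) f i.
Proof. by move=> sub; rewrite [X in _ <= X](big_setID S) /= (finset.setIidPr sub) leq_addr. Qed.

Lemma dg_D1 (T : finType) (e : rel T) (S : {set T}) x w :
  dg e S x <= (dg e (S :\ w) x).+1.
Proof. exact: card_D1_ge. Qed.

Lemma arith_tight m t s N :
  0 < t -> t.-1 <= s -> s <= m - t -> m - t + s * (m.-1 - s) <= N -> N < t * (m - t) -> False.
Proof. move=> *; nia. Qed.

Lemma arith_tight2 m t N : m - t <= N -> N < t * (m - t) -> 1 < t /\ t < m.
Proof. move=> *; nia. Qed.

Lemma tightB (T : finType) (e : rel T) (X V : {set T}) (m t : nat) (y : T) :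
  symmetric e -> bipartition e X ->
  #|V :&: X| = m -> #|V :\: X| = m -> closedP e X V m -> 0 < t ->
  (forall x, x \in V :&: X -> t <= dg e (V :\: X) x) ->
  (forall y, y \in V :\: X -> t <= dg e (V :&: X) y) ->
  NE e X V < t * (m - t) ->
  y \in V :\: X -> dg e (V :&: X) y = t ->
  exists x, goodpair e X V m x y.
Proof.
move=> sym B cA cB clo t0 dA dB Nlt yB dy.
have cdy : cdg e (V :&: X) y = m - t by move: (dg_cdg e (V :&: X) y); rewrite dy cA => <-; rewrite addKn.
have NEB := NE_B X V sym.
have Nge : m - t <= NE e X V.
  by rewrite NEB -cdy; rewrite (bigD1 y) //=; apply: leq_addr.
have [t1 tm] := arith_tight2 Nge Nlt.
have [x xA eyx] : exists2 x, x \in V :&: X & e y x.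
  have : 0 < dg e (V :&: X) y by rewrite dy.
  rewrite card_gt0 => /set0Pn [x]; rewrite inE => /andP[xA eyx]; by exists x.
have exy : e x y by rewrite sym.
have xX : x \in X by move: xA; rewrite inE => /andP[].
have yX : y \notin X by move: yB; rewrite inE => /andP[].
set s := cdg e (V :\: X) x.
have ds : dg e (V :\: X) x = m - s by move: (dg_cdg e (V :\: X) x); rewrite cB -/s => <-; rewrite addnK.
have sm : s <= m - t by move: (dA x xA) (dg_cdg e (V :\: X) x); rewrite cB -/s; lia.
have s2 : s.+2 <= t.
  rewrite leqNgt; apply/negP => st.
  pose S := [set b in V :\: X | ~~ e x b].
  have cS : #|S| = s by [].
  have yS : y \notin S by rewrite inE exy andbF.
  have big1 : \sum_(b in y |: S) cdg e (V :&: X) b <= NE e X V.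
    rewrite NEB; apply: sum_sub; apply/subsetP => b; rewrite in_setU1.
    by case/orP => [/eqP->//|]; rewrite inE => /andP[].
  have each : forall b, b \in S -> m.-1 - s <= cdg e (V :&: X) b.
    move=> b; rewrite inE => /andP[bB nxb].
    have := clo x b xA bB nxb; rewrite ds.
    move: (dg_cdg e (V :&: X) b); rewrite cA.
    move: (sm) (tm); clear; lia.
  have big2 : \sum_(b in S) (m.-1 - s) <= \sum_(b in S) cdg e (V :&: X) b.
    by apply: leq_sum => b bS; apply: each.
  rewrite sum_nat_const cS in big2.
  rewrite big_setU1 //= cdy in big1.
  apply: (arith_tight (m := m) (t := t) (s := s) (N := NE e X V)) => //.
    by move: st; clear; lia.
  by apply: (leq_trans _ big1); rewrite leq_add2l.
exists x; split => //.
  by rewrite ds; move: s2 sm tm; clear; lia.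
split.
- by rewrite dy.
- by rewrite ds dy; move: s2 sm tm; clear; lia.
right; exists t.-1; split.
- by move: t1; clear; lia.
- move=> x'; rewrite VA_eq // VB_eq // => x'A.
  have := dA x' (subsetP (subD1set _ _) _ x'A); have := dg_D1 e (V :\: X) x' y.
  clear; lia.
- move=> y'; rewrite VA_eq // VB_eq // => y'B.
  have := dB y' (subsetP (subD1set _ _) _ y'B); have := dg_D1 e (V :&: X) y' x.
  clear; lia.
- have := NE_remove sym xA yB exy; rewrite cdy.
  move: Nlt t1 tm; clear; nia.
Qed.


Lemma sideC1 (T : finType) (X V : {set T}) : V :&: ~: X = V :\: X.
Proof. by rewrite finset.setDE. Qed.
Lemma sideC2 (T : finType) (X V : {set T}) : V :\: ~: X = V :&: X.
Proof. by rewrite finset.setDE finset.setCK. Qed.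

Lemma bipC (T : finType) (e : rel T) (X : {set T}) : bipartition e X -> bipartition e (~: X).
Proof. by move=> B x y /B; rewrite !inE; case: (x \in X); case: (y \in X). Qed.

Lemma NEC (T : finType) (e : rel T) (X V : {set T}) : symmetric e -> NE e (~: X) V = NE e X V.
Proof. by move=> sym; rewrite (NE_B X V sym) /NE sideC1 sideC2. Qed.

Lemma clsC (T : finType) (e : rel T) (X V : {set T}) m :
  symmetric e -> cls e (~: X) V m -> cls e X V m.
Proof.
move=> sym; rewrite /cls sideC1 sideC2 NEC //.
case=> [H|[t [t0 h1 h2 h3]]]; [left => a b aA bB; rewrite sym; exact: H|].
by right; exists t; split.
Qed.

Lemma closedC (T : finType) (e : rel T) (X V : {set T}) m :
  symmetric e -> closedP e X V m -> closedP e (~: X) V m.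
Proof.
move=> sym C a b; rewrite sideC1 sideC2 => aB bA nab.
by rewrite addnC; apply: C => //; rewrite sym.
Qed.

Lemma tightA (T : finType) (e : rel T) (X V : {set T}) (m t : nat) (x : T) :
  symmetric e -> bipartition e X ->
  #|V :&: X| = m -> #|V :\: X| = m -> closedP e X V m -> 0 < t ->
  (forall x, x \in V :&: X -> t <= dg e (V :\: X) x) ->
  (forall y, y \in V :\: X -> t <= dg e (V :&: X) y) ->
  NE e X V < t * (m - t) ->
  x \in V :&: X -> dg e (V :\: X) x = t ->
  exists y, goodpair e X V m x y.
Proof.
move=> sym B cA cB clo t0 dA dB Nlt xA dx.
have := @tightB T e (~: X) V m t x sym (bipC B).
rewrite !sideC1 !sideC2 NEC // => /(_ cB cA (closedC sym clo) t0 dB dA Nlt xA dx).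
case=> z; rewrite /goodpair !sideC1 !sideC2 => -[zB xA' ezx d1 [d2 d3 c]]; exists z; split => //.
  by rewrite sym.
split => //; first by rewrite addnC.
by rewrite finset.setUC; apply: clsC.
Qed.

Lemma complete_pair (T : finType) (e : rel T) (X V : {set T}) (m : nat) :
  symmetric e -> #|V :&: X| = m -> #|V :\: X| = m -> 1 < m ->
  (forall a b, a \in V :&: X -> b \in V :\: X -> e a b) ->
  exists a b, goodpair e X V m a b.
Proof.
move=> sym cA cB m1 C.
have [a aA] : exists a, a \in V :&: X.
  by apply/set0Pn; rewrite -card_gt0 cA; case: m m1 {cA cB}.
have [b bB] : exists b, b \in V :\: X.
  by apply/set0Pn; rewrite -card_gt0 cB; case: m m1 {cA cB}.
have da : dg e (V :\: X) a = m.
  rewrite -cB; apply: eq_card => y; rewrite inE; case yB: (y \in V :\: X) => //=.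
  exact: C.
have db : dg e (V :&: X) b = m.
  rewrite -cA; apply: eq_card => y; rewrite inE; case yA: (y \in V :&: X) => //=.
  by rewrite sym; exact: C.
exists a, b; split => //; first exact: C.
  by rewrite da.
split; first by rewrite db.
  by rewrite da db; move: m1; clear; lia.
left => a' b' a'A b'B; apply: C.
  by move: a'A; rewrite !inE => /andP[/andP[_ ->] ->].
by move: b'B; rewrite !inE => /andP[-> /andP[_ ->]].
Qed.


Lemma arith_next m t N : (2 * t).+1 <= m -> N < t * (m - t) -> N < t.+1 * (m - t.+1).
Proof. move=> *; nia. Qed.

Lemma struct_step (T : finType) (e : rel T) (X V : {set T}) (m t : nat) :
  symmetric e -> bipartition e X ->
  #|V :&: X| = m -> #|V :\: X| = m -> 1 < m -> closedP e X V m -> 0 < t ->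
  (forall x, x \in V :&: X -> t <= dg e (V :\: X) x) ->
  (forall y, y \in V :\: X -> t <= dg e (V :&: X) y) ->
  NE e X V < t * (m - t) ->
  (exists a b, goodpair e X V m a b) \/
  [/\ (2 * t).+1 <= m, (forall x, x \in V :&: X -> t.+1 <= dg e (V :\: X) x),
      (forall y, y \in V :\: X -> t.+1 <= dg e (V :&: X) y) & NE e X V < t.+1 * (m - t.+1)].
Proof.
move=> sym B cA cB m1 clo t0 dA dB Nlt.
case: (boolP [exists y in V :\: X, dg e (V :&: X) y == t]) => [/existsP [y /andP[yB /eqP dy]]|ny].
  left; have [x gp] := tightB sym B cA cB clo t0 dA dB Nlt yB dy; by exists x, y.
case: (boolP [exists x in V :&: X, dg e (V :\: X) x == t]) => [/existsP [x /andP[xA /eqP dx]]|nx].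
  left; have [y gp] := tightA sym B cA cB clo t0 dA dB Nlt xA dx; by exists x, y.
have dA' : forall x, x \in V :&: X -> t.+1 <= dg e (V :\: X) x.
  move=> x xA; rewrite ltn_neqAle dA // andbT eq_sym; apply/negP => /eqP E.
  by apply: (negP nx); apply/existsP; exists x; rewrite xA E eqxx.
have dB' : forall y, y \in V :\: X -> t.+1 <= dg e (V :&: X) y.
  move=> y yB; rewrite ltn_neqAle dB // andbT eq_sym; apply/negP => /eqP E.
  by apply: (negP ny); apply/existsP; exists y; rewrite yB E eqxx.
case: (leqP (2 * t).+1 m) => h.
  by right; split => //; apply: arith_next.
left; apply: complete_pair => // a b aA bB; apply/negPn/negP => nab.
have := clo a b aA bB nab; have := dA' a aA; have := dB' b bB; move: h; clear; lia.
Qed.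

Lemma struct_lem (T : finType) (e : rel T) (X V : {set T}) (m : nat) :
  symmetric e -> bipartition e X ->
  #|V :&: X| = m -> #|V :\: X| = m -> 1 < m -> closedP e X V m -> cls e X V m ->
  exists a b, goodpair e X V m a b.
Proof.
move=> sym B cA cB m1 clo [C|[t [t0 dA dB Nlt]]]; first exact: complete_pair.
suff aux : forall k t, m - t <= k -> 0 < t ->
  (forall x, x \in V :&: X -> t <= dg e (V :\: X) x) ->
  (forall y, y \in V :\: X -> t <= dg e (V :&: X) y) ->
  NE e X V < t * (m - t) -> exists a b, goodpair e X V m a b.
  exact: (aux (m - t) t).
elim=> [|k IH] t' k0 t0' dA' dB' Nlt'.
  case: (struct_step sym B cA cB m1 clo t0' dA' dB' Nlt') => // -[h _ _ _].
  by move: k0 h; clear; lia.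
case: (struct_step sym B cA cB m1 clo t0' dA' dB' Nlt') => // -[h d1 d2 N2].
by apply: (IH t'.+1) => //; move: k0 h; clear; lia.
Qed.

Lemma sym_add (T : eqType) (e : rel T) a b : symmetric e -> symmetric (addE e a b).
Proof.
move=> sym x y; rewrite /addE /fab /= sym; congr (_ || _).
by rewrite orbC; congr (_ || _); rewrite andbC.
Qed.

Lemma dg_add (T : finType) (e : rel T) a b S x : dg e S x <= dg (addE e a b) S x.
Proof.
apply: subset_leq_card; apply/subsetP => y; rewrite !inE => /andP[-> exy] /=.
by rewrite /addE /= exy.
Qed.

Lemma cdg_add (T : finType) (e : rel T) a b S x : cdg (addE e a b) S x <= cdg e S x.
Proof.
apply: subset_leq_card; apply/subsetP => y; rewrite !inE => /andP[-> /=].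
by rewrite /addE /= negb_or => /andP[].
Qed.

Lemma NE_add (T : finType) (e : rel T) (X V : {set T}) a b :
  a \in V :&: X -> b \in V :\: X -> ~~ e a b -> NE (addE e a b) X V < NE e X V.
Proof.
move=> aA bB nab; rewrite /NE (bigD1 a) //= [X in _ < X](bigD1 a) //=.
rewrite -addSn; apply: leq_add; last by apply: leq_sum => i _; apply: cdg_add.
have sub : [set y in V :\: X | ~~ addE e a b a y] \subset [set y in V :\: X | ~~ e a y] :\ b.
  apply/subsetP => y; rewrite !inE /addE /fab /= !negb_or => /andP[yB /and3P[nay /negP nb _]].
  rewrite yB nay !andbT; apply/eqP => E; apply: nb; by rewrite E !eqxx.
have h2 := cardsD1 b [set y in V :\: X | ~~ e a y].
rewrite inE bB nab /= in h2.
by rewrite /cdg h2 add1n ltnS; apply: subset_leq_card.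
Qed.

Lemma cls_add (T : finType) (e : rel T) (X V : {set T}) m a b :
  cls e X V m -> cls (addE e a b) X V m.
Proof.
case=> [C|[t [t0 dA dB Nlt]]].
  by left => x y xA yB; rewrite /addE /= C.
right; exists t; split => //.
- by move=> x xA; apply: leq_trans (dA x xA) (dg_add _ _ _ _ _).
- by move=> y yB; apply: leq_trans (dB y yB) (dg_add _ _ _ _ _).
apply: leq_ltn_trans Nlt; rewrite /NE; apply: leq_sum => i _; apply: cdg_add.
Qed.


Lemma card1_eq (T : finType) (S : {set T}) u x : #|S| = 1 -> u \in S -> x \in S -> x = u.
Proof.
move=> /eqP /cards1P [z ->]; rewrite !inE => /eqP -> /eqP -> //.
Qed.

Lemma CL (T : finType) (X : {set T}) : forall m (e : rel T) (V : {set T}),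
  symmetric e -> bipartition e X -> #|V :&: X| = m -> #|V :\: X| = m -> 0 < m ->
  cls e X V m -> HB e X V.
Proof.
elim=> [|m IHm] e V sym B cA cB m0 C; first by [].
suff inner : forall n (e : rel T), NE e X V < n -> symmetric e -> bipartition e X ->
    cls e X V m.+1 -> HB e X V.
  exact: (inner (NE e X V).+1).
elim=> [|n IHn] {sym B C}e Nlt sym B C; first by [].
case: (boolP [exists a in V :&: X, exists b in V :\: X,
   ~~ e a b && (m.+3 <= dg e (V :\: X) a + dg e (V :&: X) b)]).
  move=> /existsP [a /andP[aA /existsP [b /andP[bB /andP[nab deg]]]]].
  have aX : a \in X by move: aA; rewrite inE => /andP[].
  have bX : b \notin X by move: bB; rewrite inE => /andP[].
  apply: (closure_step sym B cA cB aA bB nab deg).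
  apply: IHn.
  - have h := NE_add aA bB nab; move: h Nlt; clear; lia.
  - exact: sym_add.
  - exact: bip_add.
  - exact: cls_add.
move=> nex.
have clo : closedP e X V m.+1.
  move=> a b aA bB nab; rewrite leqNgt; apply/negP => deg; apply: (negP nex).
  by apply/existsP; exists a; rewrite aA /=; apply/existsP; exists b; rewrite bB nab.
case: m IHm IHn cA cB m0 C clo {nex} => [|m] IHm IHn cA cB m0 C clo.
  have C0 : forall a b, a \in V :&: X -> b \in V :\: X -> e a b.
    by case: C => [//|[t [t0 _ _ Nlt']]]; move: Nlt' t0; clear; nia.
  move=> u v uA vB; exists [:: v]; split => //=.
  - rewrite inE andbT; apply/eqP => E; move: vB uA; rewrite E !inE.
    by case: (v \in X); rewrite ?andbF.
  - move=> x; rewrite !inE; case xX: (x \in X).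
      case xV: (x \in V); last first.
        by apply/negP => /orP[/eqP E|/eqP E]; [move: uA|move: vB]; rewrite -E !inE xV ?andbF.
      by rewrite (card1_eq cA uA (_ : x \in V :&: X)) ?eqxx // inE xV xX.
    case xV: (x \in V); last first.
      by apply/negP => /orP[/eqP E|/eqP E]; [move: uA|move: vB]; rewrite -E !inE xV ?andbF.
    by rewrite (card1_eq cB vB (_ : x \in V :\: X)) ?eqxx ?orbT // inE xV xX.
  - by rewrite C0.
have [a [b [aA bB eab da [db deg cV']]]] := struct_lem sym B cA cB (isT : 1 < m.+2) clo C.
have aX : a \in X by move: aA; rewrite inE => /andP[].
have bX : b \notin X by move: bB; rewrite inE => /andP[].
apply: (absorb sym B cA cB aA bB eab da db deg).
apply: (IHm) => //.
- by rewrite VA_eq // cardsD1_in // cA.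
- by rewrite VB_eq // cardsD1_in // cB.
Qed.

From mathcomp Require Import ring lra.
From mathcomp Require Import boolp.
Local Open Scope ring_scope.

Lemma cs_sum (R : realFieldType) (T : finType) (S : {set T}) (f : T -> R) :
  (\sum_(i in S) f i) ^+ 2 <= #|S|%:R * \sum_(i in S) f i ^+ 2.
Proof.
have step : forall i j, f i * f j <= (f i ^+ 2 + f j ^+ 2) / 2.
  by move=> i j; have h := sqr_ge0 (f i - f j); nra.
rewrite expr2 big_distrl /=.
apply: (le_trans (y := \sum_(i in S) \sum_(j in S) (f i ^+ 2 + f j ^+ 2) / 2)).
  by apply: ler_sum => i _; rewrite big_distrr /=; apply: ler_sum => j _; apply: step.
have -> : \sum_(i in S) \sum_(j in S) (f i ^+ 2 + f j ^+ 2) / 2 =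
   (\sum_(i in S) (f i ^+ 2 *+ #|S| + \sum_(j in S) f j ^+ 2)) / 2.
  rewrite big_distrl /=; apply: eq_bigr => i _.
  by rewrite -big_distrl /= big_split /= sumr_const.
rewrite big_split /= sumrMnl sumr_const.
rewrite -mulr_natl -[_ *+ _]mulr_natl.
lra.
Qed.

Lemma eig_nbr (R : realFieldType) (T : finType) (e : rel T) (x : T -> R) (a : R) (u : T) :
  symmetric e -> a * x u = \sum_s x s * (e s u)%:R ->
  a * x u = \sum_(s in [set y | e u y]) x s.
Proof.
move=> sym ->; rewrite (bigID (fun s => e u s)) /=.
rewrite [X in _ + X]big1 ?addr0; last by move=> s /negbTE nus; rewrite sym nus mulr0.
by apply: eq_big => [s|s eus]; rewrite ?inE // sym eus mulr1.
Qed.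

Lemma side_ineq (R : realFieldType) (T : finType) (e : rel T) (X : {set T}) (x : T -> R) (a : R) :
  symmetric e -> bipartition e X ->
  (forall t, a * x t = \sum_s x s * (e s t)%:R) ->
  a ^+ 2 * (\sum_(u in X) x u ^+ 2) +
    \sum_(u in X) (#|[set y | e u y]|%:R * \sum_(s in ~: X | ~~ e u s) x s ^+ 2)
  <= (\sum_(u in X) (#|[set y | e u y]|%:R : R)) * \sum_(s in ~: X) x s ^+ 2.
Proof.
move=> sym B Heig.
rewrite mulr_sumr mulr_suml -big_split /=; apply: ler_sum => u uX.
have eq1 := eig_nbr sym (Heig u).
have eq2 : \sum_(s in ~: X) x s ^+ 2 =
    \sum_(s in [set y | e u y]) x s ^+ 2 + \sum_(s in ~: X | ~~ e u s) x s ^+ 2.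
  rewrite (bigID (fun s => e u s)) /=; congr (_ + _).
  apply: eq_bigl => s; rewrite !inE; case eus: (e u s); rewrite ?andbF ?andbT //.
  by move: (B u s eus); rewrite uX; case: (s \in X).
have cs := cs_sum [set y | e u y] x.
rewrite -eq1 exprMn in cs.
by rewrite eq2 mulrDr lerD2r.
Qed.


Lemma deg_double (T : finType) (e : rel T) (X : {set T}) :
  symmetric e -> bipartition e X ->
  (\sum_(u in X) #|[set y | e u y]| = \sum_(v in ~: X) #|[set y | e v y]|)%N.
Proof.
move=> sym B.
have h1 : forall u, u \in X -> #|[set y | e u y]| = (\sum_(s in ~: X) (e u s : nat))%N.
  move=> u uX; rewrite -card_sum; apply: eq_card => s; rewrite !inE.
  case eus: (e u s); rewrite ?andbF ?andbT //.
  by move: (B u s eus); rewrite uX; case: (s \in X).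
have h2 : forall v, v \in ~: X -> #|[set y | e v y]| = (\sum_(s in X) (e v s : nat))%N.
  move=> v vX; rewrite -card_sum; apply: eq_card => s; rewrite !inE.
  case evs: (e v s); rewrite ?andbF ?andbT //.
  by move: (B v s evs) vX; rewrite inE; case: (s \in X); case: (v \in X).
rewrite (eq_bigr _ h1) [RHS](eq_bigr _ h2) exchange_big /=.
by apply: eq_bigr => v _; apply: eq_bigr => u _; rewrite sym.
Qed.

Lemma spec_bound (R : realFieldType) (T : finType) (e : rel T) (X : {set T})
    (x : T -> R) (a : R) :
  symmetric e -> bipartition e X ->
  (forall t, exists s, e t s) ->
  (exists u0 v0, [/\ u0 \in X, v0 \notin X & ~~ e u0 v0]) ->
  (forall t, a * x t = \sum_s x s * (e s t)%:R) ->
  (exists t, x t != 0) ->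
  a ^+ 2 < (\sum_(u in X) #|[set y | e u y]|)%:R.
Proof.
move=> sym B deg1 [u0 [v0 [u0X v0X nuv]]] Heig [t0 xt0].
set E := (\sum_(u in X) #|[set y | e u y]|)%N.
have dpos : forall t, (0 < #|[set y | e t y]|)%N.
  by move=> t; have [s ets] := deg1 t; rewrite card_gt0; apply/set0Pn; exists s; rewrite inE.
have E1 : (1 <= E)%N by rewrite /E (bigD1 u0) //=; apply: leq_trans (dpos u0) (leq_addr _ _).
have h1 := side_ineq sym B Heig.
have h2 := side_ineq sym (bipC B) Heig.
rewrite finset.setCK in h2.
rewrite -!natr_sum in h1 h2.
rewrite -deg_double // -/E in h2.
rewrite ltNge; apply/negP => Ea.
set al := \sum_(u in X) x u ^+ 2 in h1 h2.
set be := \sum_(u in ~: X) x u ^+ 2 in h1 h2.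
set ZX := \sum_(u in X) _ in h1.
set ZY := \sum_(u in ~: X) _ in h2.
have al0 : 0 <= al by apply: sumr_ge0 => i _; apply: sqr_ge0.
have be0 : 0 <= be by apply: sumr_ge0 => i _; apply: sqr_ge0.
have ZX0 : 0 <= ZX.
  by apply: sumr_ge0 => i _; apply: mulr_ge0; [apply: ler0n|apply: sumr_ge0 => j _; apply: sqr_ge0].
have ZY0 : 0 <= ZY.
  by apply: sumr_ge0 => i _; apply: mulr_ge0; [apply: ler0n|apply: sumr_ge0 => j _; apply: sqr_ge0].
have prod : 0 <= (a ^+ 2 - E%:R) * (al + be) by apply: mulr_ge0; lra.
have ZXe : ZX = 0 by lra.
have ZYe : ZY = 0 by lra.
have tnn : forall (S : {set T}) i, 0 <= #|[set y | e i y]|%:R * \sum_(s0 in S | ~~ e i s0) x s0 ^+ 2.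
  by move=> S i; apply: mulr_ge0; [apply: ler0n|apply: sumr_ge0 => j _; apply: sqr_ge0].
have sq0 : forall (P : pred T), (forall s, P s -> 0 <= x s ^+ 2) by move=> P s _; apply: sqr_ge0.
have zeroX : forall u s, u \in X -> s \in ~: X -> ~~ e u s -> x s = 0.
  move=> u s uX sX nus.
  have H0 := psumr_eq0P (fun i _ => tnn _ i) ZXe uX.
  have dn0 : (#|[set y | e u y]|%:R : R) != 0 by rewrite pnatr_eq0 -lt0n dpos.
  have H : \sum_(s0 in ~: X | ~~ e u s0) x s0 ^+ 2 = 0 by apply: (mulfI dn0); rewrite mulr0.
  have H1 : x s ^+ 2 = 0 by apply: (psumr_eq0P (sq0 _) H); rewrite sX nus.
  by apply/eqP; rewrite -sqrf_eq0 H1.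
have zeroY : forall v s, v \in ~: X -> s \in X -> ~~ e v s -> x s = 0.
  move=> v s vX sX nvs.
  have H0 := psumr_eq0P (fun i _ => tnn _ i) ZYe vX.
  have dn0 : (#|[set y | e v y]|%:R : R) != 0 by rewrite pnatr_eq0 -lt0n dpos.
  have H : \sum_(s0 in X | ~~ e v s0) x s0 ^+ 2 = 0 by apply: (mulfI dn0); rewrite mulr0.
  have H1 : x s ^+ 2 = 0 by apply: (psumr_eq0P (sq0 _) H); rewrite sX nvs.
  by apply/eqP; rewrite -sqrf_eq0 H1.
have xu0 : x u0 = 0 by apply: (zeroY v0) => //; rewrite ?inE // sym.
have sig : forall u, u \in X -> a * x u = \sum_(s in ~: X) x s.
  move=> u uX; rewrite (eig_nbr sym (Heig u)) [RHS](bigID (fun s => e u s)) /=.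
  rewrite [X in _ = _ + X]big1 ?addr0; last by move=> s /andP[sX nus]; apply: (zeroX u).
  apply: eq_bigl => s; rewrite !inE; case eus: (e u s); rewrite ?andbF ?andbT //.
  by move: (B u s eus); rewrite uX; case: (s \in X).
have a0 : a != 0.
  apply/eqP => a0; move: Ea; rewrite a0 expr0n /= ler_nat leqn0 => /eqP E0.
  by move: E1; rewrite E0.
have xX : forall u, u \in X -> x u = 0.
  move=> u uX; have := sig u uX; rewrite -(sig u0 u0X) xu0 mulr0 => /eqP.
  by rewrite mulf_eq0 (negbTE a0) /= => /eqP.
have xall : forall t, x t = 0.
  move=> t; case tX: (t \in X); first exact: xX.
  have := eig_nbr sym (Heig t); rewrite big1; last first.
    move=> s; rewrite inE => ets; apply: xX.
    by move: (B t s ets); rewrite tX; case: (s \in X).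
  by move/eqP; rewrite mulf_eq0 (negbTE a0) /= => /eqP.
by move: xt0; rewrite xall eqxx.
Qed.


Lemma eig_to_fun (R : realType) (T : finType) (e : rel T) (a : R) :
  eigenvalue (adj_mx R e) a ->
  exists x : T -> R, (forall t, a * x t = \sum_s x s * (e s t)%:R) /\ exists t, x t != 0.
Proof.
move/eigenvalueP => [v Hv vn0].
exists (fun t => v 0 (enum_rank t)); split.
  move=> t; move/rowP: Hv => /(_ (enum_rank t)); rewrite !mxE => <-.
  rewrite (reindex enum_rank) /=; last by exists enum_val => s _; [exact: enum_rankK|exact: enum_valK].
  by apply: eq_bigr => s _; rewrite /adj_mx mxE !enum_rankK.
case: (pickP (fun j => v 0 j != 0)) => [j vj|H].
  by exists (enum_val j); rewrite enum_valK.
exfalso; move/eqP: vn0; apply; apply/rowP => j; rewrite mxE.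
by move: (H j) => /negbFE/eqP.
Qed.

Lemma foldmax_lt (R : realType) (c : R) (rs : seq R) :
  (forall a, a \in rs -> a < c) -> foldr Num.max (c - 1) rs < c.
Proof.
elim: rs => [|r rs IH] Hrs /=; first by rewrite gtrBl ltr01.
rewrite gt_max Hrs ?inE ?eqxx // IH // => a ars; apply: Hrs; by rewrite inE ars orbT.
Qed.

Lemma foldmax_ub (R : realType) (c : R) (rs : seq R) a :
  a \in rs -> a <= foldr Num.max (c - 1) rs.
Proof.
elim: rs => [|r rs IH] //=; rewrite inE le_max.
by case/orP => [/eqP->|/IH ->]; rewrite ?lexx ?orbT.
Qed.

Lemma finite_sup_lt (R : realType) (S : set R) (p : {poly R}) (c : R) :
  p != 0 -> (forall a, S a -> root p a) -> (forall a, S a -> a < c) -> 0 < c -> sup S < c.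
Proof.
move=> p0 Sr Sc c0.
case: (pselect (exists M, M < c /\ (forall a, S a -> a <= M))) => [[M [Mc HM]]|nM].
  case: (pselect (S !=set0)%classic) => [ne|e0].
    exact: le_lt_trans (ge_sup ne HM) Mc.
  have -> : S = set0.
    by apply/seteqP; split => // a Sa; exfalso; apply: e0; exists a.
  by rewrite sup0.
exfalso.
have key : forall rs : seq R, (forall a, a \in rs -> S a) -> exists a, S a /\ a \notin rs.
  move=> rs Hrs.
  pose M := foldr Num.max (c - 1) rs.
  have Mc : M < c by apply: foldmax_lt => a /Hrs; apply: Sc.
  have Mub : forall a, a \in rs -> a <= M by move=> a; apply: foldmax_ub.
  case: (pselect (exists a, S a /\ M < a)) => [[a [Sa Ma]]|na].
    exists a; split => //; apply/negP => ars; have := Mub a ars; by rewrite leNgt Ma.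
  exfalso; apply: nM; exists M; split => // a Sa; rewrite leNgt; apply/negP => Ma.
  by apply: na; exists a.
have build : forall k, exists rs : seq R, [/\ uniq rs, size rs = k & forall a, a \in rs -> S a].
  elim=> [|k [rs [U sz Hrs]]]; first by exists [::].
  have [a [Sa ars]] := key rs Hrs.
  exists (a :: rs); split => /=; [by rewrite ars U | by rewrite sz |].
  by move=> b; rewrite inE => /orP[/eqP->|/Hrs].
have [rs [U sz Hrs]] := build (size p).
have : all (root p) rs by apply/allP => a ars; exact: Sr (Hrs a ars).
by move=> /(max_poly_roots p0)/(_ U); rewrite sz ltnn.
Qed.


Lemma arith_final n k p E N :
  (p <= k)%N -> (k <= n)%N -> (n * (n - k + p) + k * (k - p) < E)%N -> (E + N = n * n)%N ->
  (N < (k - p) * (n - k))%N.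
Proof. move=> *; nia. Qed.

Lemma spectral_NT (R : realType) (T : finType) (e : rel T) (X : {set T}) (n k p : nat) :
  symmetric e -> bipartition e X -> #|X| = n -> #|~: X| = n ->
  (forall t, exists s, e t s) -> (p <= k)%N -> (k <= n)%N ->
  Num.sqrt (n%:R * (n%:R - k%:R + p%:R) + k%:R * (k%:R - p%:R)) <= spec_rad R e ->
  (exists u0 v0, [/\ u0 \in X, v0 \notin X & ~~ e u0 v0]) ->
  (\sum_(a in X) cdg e (~: X) a < (k - p) * (n - k))%N.
Proof.
move=> sym B cX cY deg1 pk kn Hrho nonc.
set E := (\sum_(u in X) #|[set y | e u y]|)%N.
have [u0 [v0 [u0X v0X nuv]]] := nonc.
have E0 : (0 < E)%N.
  rewrite /E (bigD1 u0) //=; apply: leq_trans (leq_addr _ _).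
  by have [s es] := deg1 u0; rewrite card_gt0; apply/set0Pn; exists s; rewrite inE.
have E0R : (0 : R) < E%:R by rewrite ltr0n.
have Hall : forall a, eigenvalue (adj_mx R e) a -> a < Num.sqrt (E%:R).
  move=> a /eig_to_fun [x [Hx nz]].
  have h := spec_bound sym B deg1 nonc Hx nz.
  case: (leP a 0) => a0.
    by apply: le_lt_trans a0 _; rewrite sqrtr_gt0.
  by rewrite -(ger0_norm (ltW a0)) -sqrtr_sqr ltr_sqrt.
have slt : spec_rad R e < Num.sqrt (E%:R).
  apply: (finite_sup_lt (p := char_poly (adj_mx R e))).
  - exact: monic_neq0 (char_poly_monic _).
  - by move=> a /= Ha; rewrite -eigenvalue_root_char.
  - by move=> a /= Ha; apply: Hall.
  - by rewrite sqrtr_gt0.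
have := le_lt_trans Hrho slt; rewrite ltr_sqrt //.
rewrite -natrB // -natrD -natrB // -!natrM -natrD ltr_nat => HB.
have EN : (E + \sum_(a in X) cdg e (~: X) a = n * n)%N.
  rewrite /E -big_split /= (eq_bigr (fun _ => n)) ?sum_nat_const ?cX //.
  move=> u uX; rewrite -cY -(dg_cdg e (~: X) u); congr (_ + _).
  apply: eq_card => y; rewrite !inE; case eu: (e u y); rewrite ?andbT ?andbF //.
  by move: (B u y eu); rewrite uX; case: (y \in X).
exact: arith_final pk kn HB EN.
Qed.


Lemma n0_gt k p n : (p < k)%N -> (n0 k p <= n)%N -> (k < n)%N.
Proof. rewrite /n0; case: (k == p.+2) => h1 h2; nia. Qed.

Lemma card_sub_union (T : finType) (A B C : {set T}) :
  A \subset B :|: C -> (#|A| <= #|B| + #|C|)%N.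
Proof.
move=> sub; apply: leq_trans (subset_leq_card sub) _.
by rewrite cardsU leq_subr.
Qed.

Unset Implicit Arguments.
Theorem corollary4p2 (R : realType) (T : finType) (e : rel T) (X : {set T})
    (n k p : nat) :
  simple_graph e -> bipartition e X ->
  #|X| = n -> #|~: X| = n ->
  min_deg_ge e k ->
  (n0 k p <= n)%N ->
  (p.+1 <= k)%N ->
  Num.sqrt (n%:R * (n%:R - k%:R + p%:R) + k%:R * (k%:R - p%:R)) <= spec_rad R e ->
  ham_biconnected_2p e X p.
Proof.
move=> [sym irr] B cX cY md hn0 hk Hrho W cW sW.
have pk : (p <= k)%N by apply: ltnW.
have kn : (k < n)%N := n0_gt hk hn0.
have deg1 : forall t, exists s, e t s.
  move=> t; have : (0 < #|[set y | e t y]|)%N by apply: leq_trans (md t); apply: leq_trans hk.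
  by rewrite card_gt0 => /set0Pn [s]; rewrite inE => es; exists s.
have Hsp : (forall a b, a \in X -> b \in ~: X -> e a b) \/
           (\sum_(a in X) cdg e (~: X) a < (k - p) * (n - k))%N.
  case: (boolP [exists u0, exists v0, [&& u0 \in X, v0 \notin X & ~~ e u0 v0]]).
    move=> /existsP [u0 /existsP [v0 /and3P[h1 h2 h3]]].
    right; apply: (spectral_NT (R := R)) => //; first exact: ltnW.
    by exists u0, v0; split.
  move=> hn; left => a b aX bY; apply/negPn/negP => nab; apply: (negP hn).
  apply/existsP; exists a; apply/existsP; exists b; rewrite aX nab andbT.
  by rewrite inE in bY.
have pW : #|W :&: X| = p.
  have := cardsID X W; rewrite finset.setDE -cW sW; move=> h; move: h; clear; lia.
have pW' : #|W :&: ~: X| = p by rewrite -cW.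
have cA : #|~: W :&: X| = (n - p)%N.
  have := cardsID W X; rewrite cX finset.setIC pW.
  have -> : X :\: W = ~: W :&: X by rewrite finset.setDE finset.setIC.
  move=> h; move: h; clear; lia.
have cB : #|~: W :\: X| = (n - p)%N.
  have := cardsID W (~: X); rewrite cY finset.setIC pW'.
  have -> : ~: X :\: W = ~: W :\: X by rewrite !finset.setDE finset.setIC.
  move=> h; move: h; clear; lia.
have HBV : HB e X (~: W).
  apply: (@CL T X (n - p)%N) => //.
    by move: kn pk; clear; lia.
  case: Hsp => [C|Nlt]; [left|right].
    move=> a b; rewrite !inE => /andP[_ aX] /andP[bX _]; apply: C => //; by rewrite inE.
  exists (k - p)%N; split.
  - by move: hk; clear; lia.
  - move=> x xA; have xX : x \in X by move: xA; rewrite inE => /andP[].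
    have sub : [set y | e x y] \subset [set y in ~: W :\: X | e x y] :|: (W :&: ~: X).
      apply/subsetP => y; rewrite !inE => exy.
      have yX : y \notin X by move: (B x y exy); rewrite xX; case: (y \in X).
      by rewrite exy yX /= andbT orbC; case: (y \in W).
    have := card_sub_union sub; rewrite pW' -/(dg e (~: W :\: X) x).
    by move: (md x); clear; lia.
  - move=> y yB; have yX : y \notin X by move: yB; rewrite inE => /andP[].
    have sub : [set z | e y z] \subset [set z in ~: W :&: X | e y z] :|: (W :&: X).
      apply/subsetP => z; rewrite !inE => eyz.
      have zX : z \in X by move: (B y z eyz) yX; case: (z \in X); case: (y \in X).
      by rewrite eyz zX /= !andbT orbC; case: (z \in W).
    have := card_sub_union sub; rewrite pW -/(dg e (~: W :&: X) y).
    by move: (md y); clear; lia.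
  - have le1 : (NE e X (~: W) <= \sum_(a in X) cdg e (~: X) a)%N.
      rewrite /NE; apply: leq_trans (_ : \sum_(a in ~: W :&: X) cdg e (~: X) a <= _)%N.
        apply: leq_sum => a _; apply: subset_leq_card; apply/subsetP => y.
        by rewrite !inE => /andP[/andP[-> _] ->].
      by apply: sum_sub; apply/subsetP => y; rewrite inE => /andP[].
    have -> : ((n - p) - (k - p) = n - k)%N by move: kn pk; clear; lia.
    exact: leq_ltn_trans le1 Nlt.
move=> u v uXW vYW.
have uA : u \in ~: W :&: X by move: uXW; rewrite !inE => /andP[-> ->].
have vB : v \in ~: W :\: X by move: vYW; rewrite !inE => /andP[-> ->].
have [s [U M P L]] := HBV u v uA vB.
by exists s; split => // x; rewrite M inE.
Qed.
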